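(* Let $K\ge2$, $\varepsilon>0$, $Z^*\in\mathbb{R}^K_{>0}$, and $\gamma\in\mathcal{P}^\varepsilon(K)$ (the value of the rung density at the current $\mu$). For $\eta\ge0$ and $Z\in\mathbb{R}^K_{>0}$ let $o^*_\eta(Z)$ be the steady state of the tilt mean field, i.e. the solution $o\in\mathbb{R}^K_{>0}$ of $g^o_k(\pi^{\mathrm{TSS},\eta}(o),Z,o)=0$ for all $k$, and define $$D_\eta(Z)=\nabla_Z V_\gamma(Z)\cdot g^Z\big(\pi^{\mathrm{TSS},\eta}(o^*_\eta(Z)),Z\big),$$ the time derivative of $V_\gamma(Z(t))$ at the point $Z$ along the ODE $\dot Z=g^Z(\pi^{\mathrm{TSS},\eta}(o^*_\eta(Z)),Z)$. Then for all $Z\in\mathbb{R}^K_{>0}$ and all $\eta'>\eta\ge0$, $$D_{\eta'}(Z)\le D_\eta(Z)\le 0,$$ and both inequalities are strict unless $Z$ is a scalar multiple of $Z^*$, in which case both derivatives equal $0$.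
   Context: $\mathcal{P}^\varepsilon(K)$ is the set of probability vectors on $\{1,\dots,K\}$ with all entries $\ge\varepsilon$. For $\pi\in\mathcal P^\varepsilon(K)$ and $Z\in\mathbb{R}^K_{>0}$, the mean field of the partition function estimates is $g^Z_k(\pi,Z)=\dfrac{Z_k^*}{\sum_\ell\pi_\ell Z^*_\ell/Z_\ell}-Z_k$, and the mean field of the tilts is $g^o_k(\pi,Z,o)=\dfrac{1}{\gamma_k}\dfrac{\pi_kZ_k^*/Z_k}{\sum_\ell\pi_\ell Z_\ell^*/Z_\ell}-o_k$. The (unregularized) visit-control rung density with parameter $\eta\ge0$ is $\pi^{\mathrm{TSS},\eta}_k(o)=\dfrac{\gamma_k o_k^{-\eta}}{\sum_\ell\gamma_\ell o_\ell^{-\eta}}$. The Lyapunov function is the relative entropy $V_\gamma(Z)=-\sum_k\gamma_k\log(r_k/\gamma_k)$ with $r_k=\dfrac{\gamma_kZ_k^*/Z_k}{\sum_\ell\gamma_\ell Z^*_\ell/Z_\ell}$. *)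

(* Defs.v *)
From HB Require Import structures.
From mathcomp Require Import all_boot all_order all_algebra.
From mathcomp Require Import all_classical all_reals all_analysis.
Set Implicit Arguments. Unset Strict Implicit. Unset Printing Implicit Defensive.
Import Order.TTheory GRing.Theory Num.Theory.
Local Open Scope ring_scope.

Section Defs.
Variables (R : realType) (K : nat).
Implicit Types (gam pi Z Zs o : 'I_K -> R) (eps eta : R).

Definition Peps eps gam : Prop :=
  (forall k, eps <= gam k) /\ \sum_(l < K) gam l = 1.

Definition wsum Zs pi Z : R := \sum_(l < K) pi l * Zs l / Z l.

Definition gZ Zs pi Z (k : 'I_K) : R := Zs k / wsum Zs pi Z - Z k.

Definition gO gam Zs pi Z o (k : 'I_K) : R :=
  (gam k)^-1 * ((pi k * Zs k / Z k) / wsum Zs pi Z) - o k.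

Definition piTSS gam eta o (k : 'I_K) : R :=
  gam k * powR (o k) (- eta) / \sum_(l < K) gam l * powR (o l) (- eta).

Definition rr gam Zs Z (k : 'I_K) : R := gam k * Zs k / Z k / wsum Zs gam Z.
Definition Vgam gam Zs Z : R :=
  - \sum_(k < K) gam k * ln (rr gam Zs Z k / gam k).

Definition partial (F : ('I_K -> R) -> R) (k : 'I_K) Z : R :=
  derive1 (fun t : R => F (fun l => if l == k then Z l + t else Z l)) 0.

Definition Dder gam Zs pi Z : R :=
  \sum_(k < K) partial (Vgam gam Zs) k Z * gZ Zs pi Z k.

End Defs.

(* Main.v *)
Require Import Defs.
From HB Require Import structures.
From mathcomp Require Import all_boot all_order all_algebra.
From mathcomp Require Import all_classical all_reals all_analysis.
From mathcomp Require Import ring lra.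
Import Order.TTheory GRing.Theory Num.Theory.
Local Open Scope ring_scope.

Module Helpers.
Set Implicit Arguments. Unset Strict Implicit. Unset Printing Implicit Defensive.


Section Der.
Variable R : realType.
Implicit Types (f g : R -> R) (x a b : R).

Lemma dD f g x a b : is_derive x 1 f a -> is_derive x 1 g b ->
  is_derive x 1 (fun t => f t + g t) (a + b).
Proof. move=> hf hg; exact: (is_deriveD hf hg). Qed.

Lemma dN f x a : is_derive x 1 f a -> is_derive x 1 (fun t => - f t) (- a).
Proof. move=> hf; exact: (is_deriveN hf). Qed.

Lemma dM f g x a b : is_derive x 1 f a -> is_derive x 1 g b ->
  is_derive x 1 (fun t => f t * g t) (f x * b + g x * a).
Proof. move=> hf hg; exact: (is_deriveM hf hg). Qed.

Lemma dC x (c : R) : is_derive x 1 (fun _ => c) 0.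
Proof. exact: is_derive_cst. Qed.

Lemma dId x : is_derive x 1 (fun t : R => t) 1.
Proof. exact: is_derive_id. Qed.

Lemma dV f x a : f x != 0 -> is_derive x 1 f a ->
  is_derive x 1 (fun t => (f t)^-1) (- (f x) ^- 2 * a).
Proof.
move=> fx0 [df dv]; apply: DeriveDef; first exact: derivableV.
by rewrite deriveV // dv.
Qed.

Lemma dln f x a : 0 < f x -> is_derive x 1 f a ->
  is_derive x 1 (fun t => ln (f t)) (a / f x).
Proof.
move=> fx0 [df dv].
have dl : derivable (@ln R) (f x) 1 by case: (is_derive1_ln fx0).
have hc : derivable ((@ln R) \o f) x 1.
  apply/derivable1_diffP; apply: differentiable_comp;
  exact/derivable1_diffP.
apply: DeriveDef; first exact: hc.
rewrite -derive1E (derive1_comp df dl) !derive1E dv.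
by rewrite (@derive_val _ _ _ _ _ _ _ (is_derive1_ln fx0)) mulrC.
Qed.

Lemma dsum n (h : 'I_n -> R -> R) x (dh : 'I_n -> R) :
  (forall i, is_derive x 1 (h i) (dh i)) ->
  is_derive x 1 (fun t => \sum_(i < n) h i t) (\sum_(i < n) dh i).
Proof.
move=> hd; have := is_derive_sum hd.
by rewrite (_ : \sum_(i < n) h i = (fun t => \sum_(i < n) h i t)) // fct_sumE.
Qed.
Lemma dMc f x b (c : R) : is_derive x 1 f b -> is_derive x 1 (fun t => c * f t) (c * b).
Proof. move=> h; have := dM (dC x c) h; rewrite mulr0 addr0; exact. Qed.

Lemma dMr f x b (c : R) : is_derive x 1 f b -> is_derive x 1 (fun t => f t * c) (b * c).
Proof. move=> h; have := dM h (dC x c); rewrite mulr0 add0r mulrC; exact. Qed.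
End Der.

Lemma sum_gt0 (R : numDomainType) (I : finType) (F : I -> R) (i0 : I) :
  (forall i, 0 <= F i) -> 0 < F i0 -> 0 < \sum_i F i.
Proof.
move=> h0 h1; rewrite lt_def sumr_ge0 // andbT; apply/eqP => /(psumr_eq0P (fun i _ => h0 i)).
by move=> /(_ i0 isT) F0; move: h1; rewrite F0 ltxx.
Qed.

Lemma dVgam (R : realType) (K : nat) (gam Zs : 'I_K -> R) (u : 'I_K -> R -> R) (du : 'I_K -> R) x :
 (0 < K)%N -> (forall l, 0 < gam l) -> (forall l, 0 < Zs l) -> (forall l, 0 < u l x) ->
 (forall l, is_derive x 1 (u l) (du l)) ->
 is_derive x 1 (fun t => Vgam gam Zs (fun l => u l t))
   (\sum_(j < K) gam j * (du j / u j x +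
      (\sum_(l < K) gam l * Zs l * (- (u l x) ^- 2 * du l)) / wsum Zs gam (fun l => u l x))).
Proof.
move=> K0 gp Zp up hu.
set Sd := \sum_(l < K) gam l * Zs l * _.
have Sp : 0 < wsum Zs gam (fun l => u l x).
  apply: (@sum_gt0 _ _ _ (Ordinal K0)) => *; last by rewrite divr_gt0 ?mulr_gt0.
  by rewrite ltW // divr_gt0 ?mulr_gt0.
have hS : is_derive x 1 (fun t => wsum Zs gam (fun l => u l t)) Sd.
  rewrite /wsum; apply: dsum => l; apply: dMc; apply: dV => //; exact: lt0r_neq0.
rewrite /Vgam /rr.
apply: is_derive_eq.
  apply: dN; apply: dsum => j; apply: dMc; apply: dln.
    by rewrite !divr_gt0 ?mulr_gt0.
  apply: dMr; apply: dM; last exact: (dV (lt0r_neq0 Sp) hS).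
  apply: dMc; apply: (dV _ (hu j)); exact: lt0r_neq0.
rewrite -sumrN; apply: eq_bigr => j _.
have := gp j; have := up j; have := Zp j; move: Sp.
move=> S0 Z0 u0 g0.
move=> *.
field; by rewrite !lt0r_neq0.
Qed.

Lemma sum_delta (R : ringType) (K : nat) (k : 'I_K) (a : 'I_K -> R) :
  \sum_(j < K) (if j == k then a j else 0) = a k.
Proof. by rewrite -big_mkcond big_pred1_eq. Qed.

Lemma partialV (R : realType) (K : nat) (gam Zs Z : 'I_K -> R) (k : 'I_K) :
 (0 < K)%N -> (forall l, 0 < gam l) -> (forall l, 0 < Zs l) -> (forall l, 0 < Z l) ->
 partial (Vgam gam Zs) k Z =
   gam k / Z k - (\sum_(j < K) gam j) * (gam k * Zs k / Z k ^+ 2 / wsum Zs gam Z).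
Proof.
move=> K0 gp Zp Zpos.
pose u := fun l (t : R) => if l == k then Z l + t else Z l.
have u0 : (fun l => u l 0) = Z by apply/funext => l; rewrite /u; case: eqP => //; rewrite addr0.
have hu : forall l : 'I_K, is_derive (0:R) (1:R) (u l) ((l == k)%:R : R).
  move=> l; rewrite /u; case: eqP => _.
    have := dD (dC 0 (Z l)) (dId 0); rewrite add0r; exact.
  exact: dC.
have up : forall l, 0 < u l 0 by move=> l; rewrite (_ : u l 0 = Z l) // -u0.
have H := dVgam K0 gp Zp up hu.
rewrite /partial derive1E (@derive_val _ _ _ _ _ _ _ H).
have u0' : forall l, u l 0 = Z l by move=> l; rewrite -u0.
under eq_bigr do rewrite !u0'.
under [X in wsum _ _ X]eq_fun do rewrite u0'.
have inner : \sum_(l < K) gam l * Zs l * (- u l 0 ^- 2 * (l == k)%:R)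
   = - (gam k * Zs k / Z k ^+ 2).
  rewrite -(sum_delta k (fun l => - (gam l * Zs l / Z l ^+ 2))); apply: eq_bigr => l _.
  rewrite u0'; case: eqP => _ /=; rewrite ?mulr1 ?mulr0 ?oppr0 //. by rewrite mulrN.
rewrite inner.
set c := (- _) / _.
rewrite (eq_bigr (fun i => (if i == k then gam i / Z i else 0) + gam i * c)); last first.
  by move=> i _; case: eqP => _ /=; rewrite mulrDr ?mul1r ?mul0r ?mulr0.
rewrite big_split /= sum_delta -mulr_suml /c.
rewrite (_ : [eta Z] = Z) //.
by rewrite mulNr mulrN.
Qed.


Section Sym.
Variables (R : realFieldType) (K : nat).

Lemma sym_sum (f : 'I_K -> 'I_K -> R) :
  (\sum_i \sum_j f i j) *+ 2 = \sum_i \sum_j (f i j + f j i).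
Proof.
rewrite mulr2n; under [RHS]eq_bigr do rewrite big_split.
by rewrite big_split /= [X in _ + X = _]exchange_big.
Qed.

Lemma sym_ge0 (f : 'I_K -> 'I_K -> R) :
  (forall i j, 0 <= f i j + f j i) -> 0 <= \sum_i \sum_j f i j.
Proof.
move=> h; rewrite -(pmulrn_lge0 _ (isT : (0 < 2)%N)) sym_sum.
by apply: sumr_ge0 => i _; apply: sumr_ge0 => j _.
Qed.

Lemma sym_gt0 (f : 'I_K -> 'I_K -> R) i0 j0 :
  (forall i j, 0 <= f i j + f j i) -> 0 < f i0 j0 + f j0 i0 ->
  0 < \sum_i \sum_j f i j.
Proof.
move=> h h0; rewrite -(pmulrn_lgt0 _ (isT : (0 < 2)%N)) sym_sum.
apply: (@sum_gt0 _ _ _ i0) => [i|]; first by apply: sumr_ge0.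
by apply: (@sum_gt0 _ _ _ j0).
Qed.

Lemma lin3 (a b c : 'I_K -> R) A B C :
  \sum_k (a k * A + b k * B + c k * C) =
  (\sum_k a k) * A + (\sum_k b k) * B + (\sum_k c k) * C.
Proof. by rewrite !big_split /= -!mulr_suml. Qed.

Lemma var_sym (gam w : 'I_K -> R) : \sum_k gam k = 1 ->
  \sum_k gam k * w k ^+ 2 - (\sum_k gam k * w k) ^+ 2 =
  \sum_i \sum_j (gam i * gam j * (w i ^+ 2 - w i * w j)).
Proof.
move=> g1.
rewrite expr2 mulr_suml.
under [X in _ - X]eq_bigr do rewrite mulr_sumr.
rewrite -sumrB; apply: eq_bigr => i _.
rewrite -[gam i * _]mulr1 -g1 mulr_sumr -sumrB; apply: eq_bigr => j _.
ring.
Qed.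
End Sym.

Section Expo.
Variable R : realType.

Lemma exp_pair (x y a a' : R) : 0 < x -> 0 < y -> a < a' ->
  0 <= (x - y) * (expR (- a * ln x) * expR (- a' * ln y) - expR (- a' * ln x) * expR (- a * ln y))
  /\ (x != y -> 0 < (x - y) * (expR (- a * ln x) * expR (- a' * ln y) - expR (- a' * ln x) * expR (- a * ln y))).
Proof.
move=> x0 y0 aa; rewrite -!expRD.
have key : forall u v : R, 0 < u -> 0 < v -> u < v ->
  0 < (u - v) * (expR (- a * ln u + - a' * ln v) - expR (- a' * ln u + - a * ln v)).
  move=> u v u0 v0 uv.
  have lnuv : ln u < ln v by rewrite ltr_ln ?posrE.
  have h1 : u - v < 0 by lra.
  have : - a * ln u + - a' * ln v < - a' * ln u + - a * ln v by nra.
  rewrite -ltr_expR => h2.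
  have h3 : expR (- a * ln u + - a' * ln v) - expR (- a' * ln u + - a * ln v) < 0 by lra.
  by rewrite -mulrNN mulr_gt0 // oppr_gt0.
case: (ltgtP x y) => [xy|yx|->].
- have h := key _ _ x0 y0 xy; split => [|//]; exact: ltW.
- have h := key _ _ y0 x0 yx.
  have E : forall p q : R, (x - y) * (q - p) = (y - x) * (p - q) by move=> p q; ring.
  rewrite (addrC (- a * ln x)) (addrC (- a' * ln x)) E; split => [|//]; exact: ltW.
- by rewrite subrr mul0r lexx; split => //; rewrite eqxx.
Qed.
End Expo.

Definition Fa (R : realType) (K : nat) (gam w : 'I_K -> R) (b : R) :=
  (\sum_k gam k * w k * expR (- b * ln (w k))) / (\sum_k gam k * expR (- b * ln (w k))).

Lemma F_mono (R : realType) (K : nat) (gam w : 'I_K -> R) (a a' : R) :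
  (0 < K)%N -> (forall k, 0 < gam k) -> (forall k, 0 < w k) -> a < a' ->
  Fa gam w a' <= Fa gam w a /\ ((exists i j, w i != w j) -> Fa gam w a' < Fa gam w a).
Proof.
move=> K0 gp wp aa.
pose e b k := expR (- b * ln (w k)).
pose N b := \sum_k gam k * w k * e b k.
pose M b := \sum_k gam k * e b k.
have Mp : forall b, 0 < M b.
  move=> b; apply: (@sum_gt0 _ _ _ (Ordinal K0)) => [i|]; [apply: ltW|]; by rewrite mulr_gt0 // expR_gt0.
have E : Fa gam w a - Fa gam w a' = (N a * M a' - N a' * M a) / (M a * M a').
  rewrite /Fa -/(e a) -/(e a').
  have := Mp a; have := Mp a'; rewrite /M /N => m1 m2.
  field; by rewrite !lt0r_neq0.
pose f i j := gam i * gam j * w i * (e a i * e a' j - e a' i * e a j).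
have ED : N a * M a' - N a' * M a = \sum_i \sum_j f i j.
  rewrite /N /M !mulr_suml -sumrB; apply: eq_bigr => i _.
  rewrite !mulr_sumr -sumrB; apply: eq_bigr => j _; rewrite /f; ring.
have fs : forall i j, f i j + f j i = gam i * gam j *
   ((w i - w j) * (expR (- a * ln (w i)) * expR (- a' * ln (w j)) -
                   expR (- a' * ln (w i)) * expR (- a * ln (w j)))).
  by move=> i j; rewrite /f /e; ring.
have Dp : 0 < M a * M a' by rewrite mulr_gt0.
split.
  rewrite -subr_ge0 E ED; apply: divr_ge0; last exact: ltW.
  apply: sym_ge0 => i j.
  rewrite fs; apply: mulr_ge0; first by apply: mulr_ge0; apply: ltW.
  by case: (exp_pair (wp i) (wp j) aa).
move=> [i0 [j0 ne]].
rewrite -subr_gt0 E ED; apply: divr_gt0 => //; apply: (@sym_gt0 _ _ _ i0 j0) => [i j|].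
  rewrite fs; apply: mulr_ge0; first by apply: mulr_ge0; apply: ltW.
  by case: (exp_pair (wp i) (wp j) aa).
rewrite fs; apply: mulr_gt0; first exact: mulr_gt0.
by case: (exp_pair (wp i0) (wp j0) aa) => _; apply.
Qed.


Lemma rel_alg (R : realFieldType) (g p N W zs z o : R) : g != 0 -> N != 0 -> W != 0 -> z != 0 ->
  p * (zs / z) - o * (N * W) = N * W * (g^-1 * (g * p / N * zs / z / W) - o).
Proof. by move=> *; field; apply/and4P. Qed.

Lemma steady (R : realType) (K : nat) (gam Zs Z o : 'I_K -> R) (eta : R) :
  (0 < K)%N -> (forall k, 0 < gam k) -> (forall k, 0 < Zs k) -> (forall k, 0 < Z k) ->
  0 <= eta -> (forall k, 0 < o k) ->
  (forall k, gO gam Zs (piTSS gam eta o) Z o k = 0) ->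
  0 < wsum Zs (piTSS gam eta o) Z /\
  wsum Zs (piTSS gam eta o) Z = Fa gam (fun k => Zs k / Z k) (eta / (1 + eta)).
Proof.
move=> K0 gp Zsp Zp eta0 op hs.
pose p k := powR (o k) (- eta).
have pE : forall k, p k = expR (- eta * ln (o k)) by move=> k; rewrite /p /powR gt_eqF.
have pp : forall k, 0 < p k by move=> k; rewrite pE expR_gt0.
pose N := \sum_l gam l * p l.
have Np : 0 < N.
  apply: (@sum_gt0 _ _ _ (Ordinal K0)) => [i|]; [apply: ltW|]; by rewrite mulr_gt0.
have piE : piTSS gam eta o = fun k => gam k * p k / N by [].
have Wp : 0 < wsum Zs (piTSS gam eta o) Z.
  rewrite piE; apply: (@sum_gt0 _ _ _ (Ordinal K0)) => [i|]; [apply: ltW|];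
  by rewrite !mulr_gt0 ?invr_gt0.
split => //.
set W := wsum _ _ _ in Wp *.
have rel : forall k, p k * (Zs k / Z k) = o k * (N * W).
  move=> k; have := hs k; rewrite /gO -/W piE => hk.
  apply/eqP; rewrite -subr_eq0; apply/eqP.
  have gk := gp k; have Zk := Zp k.
  rewrite -[RHS](mulr0 (N * W)) -hk.
  by rewrite (rel_alg (g:=gam k)) ?lt0r_neq0.
pose L := ln (N * W).
have NWp : 0 < N * W by rewrite mulr_gt0.
have lnrel : forall k, (1 + eta) * ln (o k) = ln (Zs k / Z k) - L.
  move=> k; have h := congr1 (@ln R) (rel k).
  rewrite [ln (p k * _)]lnM ?posrE ?pp ?divr_gt0 // in h.
  rewrite [ln (o k * _)]lnM ?posrE ?op // in h.
  rewrite pE expRK -/L in h.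
  rewrite mulrDl mul1r; move: h; rewrite mulNr; lra.
pose a := eta / (1 + eta).
pose B := expR (a * L).
have pE2 : forall k, p k = expR (- a * ln (Zs k / Z k)) * B.
  move=> k; rewrite pE /B -expRD; congr expR.
  have e1 : 1 + eta != 0 by rewrite lt0r_neq0 // ltr_pwDl.
  have := lnrel k => h.
  rewrite (_ : ln (o k) = (ln (Zs k / Z k) - L) / (1 + eta)); last first.
    by rewrite -h mulrAC divff // mul1r.
  rewrite /a; field.
  exact: e1.
pose M := \sum_k gam k * expR (- a * ln (Zs k / Z k)).
have NE : N = B * M.
  rewrite /N /M mulr_sumr; apply: eq_bigr => l _; rewrite pE2; ring.
have Bp : 0 < B by rewrite expR_gt0.
have Mp : 0 < M.
  apply: (@sum_gt0 _ _ _ (Ordinal K0)) => [i|]; [apply: ltW|]; by rewrite mulr_gt0 ?expR_gt0.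
rewrite /W /wsum piE /Fa -/a -/M.
rewrite (eq_bigr (fun l => (gam l * (Zs l / Z l) * expR (- a * ln (Zs l / Z l))) * (B / N))); last first.
  by move=> l _; rewrite pE2; ring.
rewrite -mulr_suml NE; field.
by rewrite !lt0r_neq0.
Qed.

Lemma Dformula (R : realType) (K : nat) (gam Zs Z pi : 'I_K -> R) :
  (0 < K)%N -> (forall k, 0 < gam k) -> \sum_k gam k = 1 -> (forall k, 0 < Zs k) ->
  (forall k, 0 < Z k) -> wsum Zs pi Z != 0 ->
  Dder gam Zs pi Z =
   ((\sum_k gam k * (Zs k / Z k)) ^+ 2 - \sum_k gam k * (Zs k / Z k) ^+ 2) /
   ((\sum_k gam k * (Zs k / Z k)) * wsum Zs pi Z).
Proof.
move=> K0 gp g1 Zsp Zp W0.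
have SE : wsum Zs gam Z = \sum_k gam k * (Zs k / Z k).
  by apply: eq_bigr => k _; rewrite mulrA.
have Sp : 0 < \sum_k gam k * (Zs k / Z k).
  apply: (@sum_gt0 _ _ _ (Ordinal K0)) => [i|]; [apply: ltW|]; by rewrite mulr_gt0 ?divr_gt0.
set S := \sum_k gam k * (Zs k / Z k) in SE Sp *.
set W := wsum Zs pi Z in W0 *.
rewrite /Dder.
rewrite (eq_bigr (fun k => gam k * (Zs k / Z k) * (W^-1 + S^-1) + gam k * (-1)
   + gam k * (Zs k / Z k) ^+ 2 * (- (S * W)^-1))); last first.
  move=> k _; rewrite partialV // g1 SE /gZ -/W.
  have := Zp k; move: (Z k) => z zp.
  field; by rewrite W0 !lt0r_neq0.
rewrite lin3 -/S g1.
field; by rewrite W0 lt0r_neq0.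
Qed.



End Helpers.
Import Helpers.
Unset Implicit Arguments. Set Strict Implicit.

Theorem proposition2 (R : realType) (K : nat) (eps : R) (Zs gam : 'I_K -> R) :
  (2 <= K)%N -> 0 < eps -> (forall k, 0 < Zs k) -> Peps eps gam ->
  forall (Z : 'I_K -> R) (eta eta' : R) (o o' : 'I_K -> R),
    (forall k, 0 < Z k) -> 0 <= eta -> eta < eta' ->
    (* o = o*_eta(Z) : positive steady state of the tilt mean field *)
    (forall k, 0 < o k) ->
    (forall k, gO gam Zs (piTSS gam eta o) Z o k = 0) ->
    (* o' = o*_eta'(Z) *)
    (forall k, 0 < o' k) ->
    (forall k, gO gam Zs (piTSS gam eta' o') Z o' k = 0) ->
    let D := Dder gam Zs (piTSS gam eta o) Z in
    let D' := Dder gam Zs (piTSS gam eta' o') Z in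
    [/\ D' <= D, D <= 0,
        (exists c : R, forall k, Z k = c * Zs k) -> D' = 0 /\ D = 0
      & ~ (exists c : R, forall k, Z k = c * Zs k) -> D' < D /\ D < 0].
Proof.
move=> K2 eps0 Zsp [ge g1] Z eta eta' o o' Zp eta0 ee op hs op' hs' D D'.
have K0 : (0 < K)%N by apply: leq_trans K2.
have gp : forall k, 0 < gam k by move=> k; apply: lt_le_trans (ge k).
have eta0' : 0 <= eta' by apply: ltW; apply: le_lt_trans ee.
have [Wp WE] := steady K0 gp Zsp Zp eta0 op hs.
have [Wp' WE'] := steady K0 gp Zsp Zp eta0' op' hs'.
set w := fun k => Zs k / Z k in WE WE'.
have wp : forall k, 0 < w k by move=> k; rewrite divr_gt0.
have aa : eta / (1 + eta) < eta' / (1 + eta').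
  rewrite -subr_gt0.
  have -> : eta' / (1 + eta') - eta / (1 + eta) = (eta' - eta) / ((1 + eta) * (1 + eta')).
    field; apply/andP; split; rewrite lt0r_neq0 //; lra.
  rewrite divr_gt0 ?subr_gt0 // mulr_gt0 //; lra.
have [Fle Flt] := F_mono K0 gp wp aa.
set W := wsum Zs (piTSS gam eta o) Z in Wp WE.
set W' := wsum Zs (piTSS gam eta' o') Z in Wp' WE'.
have DE : D = - (\sum_k gam k * w k ^+ 2 - (\sum_k gam k * w k) ^+ 2) / ((\sum_k gam k * w k) * W).
  by rewrite /D Dformula ?lt0r_neq0 // opprB.
have DE' : D' = - (\sum_k gam k * w k ^+ 2 - (\sum_k gam k * w k) ^+ 2) / ((\sum_k gam k * w k) * W').
  by rewrite /D' Dformula ?lt0r_neq0 // opprB.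
have Sp : 0 < \sum_k gam k * w k.
  apply: (@sum_gt0 _ _ _ (Ordinal K0)) => [i|]; [apply: ltW|]; by rewrite mulr_gt0.
rewrite var_sym // in DE DE'.
set X := \sum_i \sum_j _ in DE DE'.
set S := \sum_k gam k * w k in DE DE' Sp.
have fs : forall i j, gam i * gam j * (w i ^+ 2 - w i * w j) + gam j * gam i * (w j ^+ 2 - w j * w i)
   = gam i * gam j * (w i - w j) ^+ 2 by move=> i j; ring.
have X0 : 0 <= X by apply: sym_ge0 => i j; rewrite fs mulr_ge0 ?sqr_ge0 // mulr_ge0 // ltW.
have Dd : D - D' = X * (W - W') / (S * W * W').
  rewrite DE DE'; field; by rewrite !lt0r_neq0.
have WW : W' <= W by rewrite WE WE'.
have Dle : D' <= D.
  rewrite -subr_ge0 Dd; apply: divr_ge0; first by rewrite mulr_ge0 // subr_ge0.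
  by rewrite ltW // !mulr_gt0.
have D0 : D <= 0.
  rewrite DE mulNr oppr_le0 divr_ge0 // ltW // mulr_gt0 //.
have [[i [j ne]]|allEq] := pselect (exists i j, w i != w j).
  have Xp : 0 < X.
    apply: (@sym_gt0 _ _ _ i j) => [i' j'|]; rewrite fs.
      by rewrite mulr_ge0 ?sqr_ge0 // mulr_ge0 // ltW.
    apply: mulr_gt0; first by rewrite mulr_gt0.
    by rewrite lt_def sqrf_eq0 subr_eq0 ne sqr_ge0.
  have Wlt : W' < W by rewrite WE WE'; apply: Flt; exists i, j.
  split => //.
    move=> [c hc]; exfalso; move/negP: ne; apply.
    have c0 : c != 0.
      apply/eqP => c0; have := Zp i; rewrite hc c0 mul0r ltxx //.
    have wc : forall k, w k = c^-1.
      by move=> k; rewrite /w hc invfM mulrCA divff ?mulr1 // lt0r_neq0.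
    by rewrite !wc.
  move=> _; split.
    rewrite -subr_gt0 Dd; apply: divr_gt0; first by rewrite mulr_gt0 // subr_gt0.
    by rewrite !mulr_gt0.
  by rewrite DE mulNr oppr_lt0 divr_gt0 // mulr_gt0.
have weq : forall i j, w i = w j.
  move=> i j; case: (eqVneq (w i) (w j)) => // ne; exfalso; apply: allEq; exists i, j; exact: ne.
have X00 : X = 0.
  rewrite /X; apply: big1 => i _; apply: big1 => j _.
  by rewrite (weq j i) -expr2 subrr mulr0.
split => //.
  by move=> _; rewrite DE DE' X00 oppr0 !mul0r.
move=> nc; exfalso; apply: nc; exists (w (Ordinal K0))^-1 => k.
by rewrite (weq (Ordinal K0) k) /w invf_div divfK // lt0r_neq0.
Qed.
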